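(* Let $\Omega$ be a bounded domain in $\mathbb{R}^n$ (or $\mathbb{C}^n$), let $x\in\overline\Omega$, and let $\mathcal{E}$ be a closed subspace of $\mathcal{C}(\overline\Omega)$ (with the sup-norm). Suppose there exist constants $0<\alpha<1$, $0<s\leq 1$, $0<t<1$, $0<A<1$ and $C>0$ such that for each neighbourhood $U$ of $x$ (in $\overline\Omega$) with $\mathrm{r}_x(U)<1$, there exists a function $f_U\in\mathcal{E}$ with the properties 1) $f_U(x)=1$; 2) $|f_U(y)|\leq\alpha$ for all $y\in\overline\Omega\setminus U$; 3) $|f_U(y)|\leq C\,\big(\log[1/\mathrm{r}_x(U)]\big)^t$ for all $y\in U$; and 4) $\{y\in\overline\Omega : |f_U(y)|<1+\varepsilon^s\}\supset B(x;A\,\mathrm{r}_x(U)\,\varepsilon)$ for every $0<\varepsilon<1$. Then there exists a function $F\in\mathcal{E}$ which peaks at $x$.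
   Context: $\mathcal{C}(\overline\Omega)$ denotes the space of all complex-valued continuous functions on $\overline\Omega$. For a set $U$ containing $x$, $\mathrm{r}_x(U):=\sup_{y\in U}|y-x|$, where $|\cdot|$ is the Euclidean norm. For $y\in\overline\Omega$ and $r>0$, $B(y;r):=\overline\Omega\cap\mathbb{B}(y;r)$, where $\mathbb{B}(y;r)$ is the open Euclidean ball of center $y$ and radius $r$. A function $f\in\mathcal{E}$ is said to peak at $x$ if $f(x)=1$ and $|f(y)|<1$ for all $y\in\overline\Omega\setminus\{x\}$. *)

(* Defs.v *)
From HB Require Import structures.
From mathcomp Require Import all_boot all_order all_algebra.
From mathcomp Require Import all_classical all_reals all_analysis.
From mathcomp.real_closed Require Import complex.
Set Implicit Arguments. Unset Strict Implicit. Unset Printing Implicit Defensive.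
Import Order.TTheory GRing.Theory Num.Theory.
Import numFieldTopology.Exports numFieldNormedType.Exports.
Local Open Scope classical_set_scope.
Local Open Scope ring_scope.

Definition eucl_norm {R : realType} {n : nat} (v : 'rV[R]_n) : R :=
  Num.sqrt (\sum_(i < n) v ord0 i ^+ 2).
Definition eucl_dist {R : realType} {n : nat} (x y : 'rV[R]_n) : R :=
  eucl_norm (x - y).

Definition cmod {R : realType} (z : R[i]) : R := ComplexField.Normc.normc z.

Definition bounded_domain {R : realType} {n : nat} (Om : set 'rV[R]_n) : Prop :=
  [/\ Om !=set0, open Om, connected Om &
      exists M : R, forall y, Om y -> eucl_norm y <= M].

Definition cont_on {R : realType} {n : nat} (K : set 'rV[R]_n)
  (f : 'rV[R]_n -> R[i]) : Prop :=
  forall x, K x -> forall e : R, 0 < e -> exists2 d : R, 0 < d &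
    forall y, K y -> eucl_dist y x < d -> cmod (f y - f x) < e.

(* E is a closed (for the sup-norm on K) complex-linear subspace of C(K).
   Functions are total functions R^n -> C, only their values on K matter. *)
Definition closed_subspace_CK {R : realType} {n : nat} (K : set 'rV[R]_n)
  (E : set ('rV[R]_n -> R[i])) : Prop :=
  [/\ (forall f, E f -> cont_on K f),
      E (fun _ => 0),
      (forall f g, E f -> E g -> E (fun y => f y + g y)),
      (forall (c : R[i]) f, E f -> E (fun y => c * f y)) &
      (forall (u : nat -> 'rV[R]_n -> R[i]) (g : 'rV[R]_n -> R[i]),
         (forall k, E (u k)) ->
         (forall e : R, 0 < e -> exists N : nat, forall k, (N <= k)%N ->
             forall y, K y -> cmod (u k y - g y) < e) ->
         E g)].

Definition rel_nbhd {R : realType} {n : nat} (K U : set 'rV[R]_n)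
  (x : 'rV[R]_n) : Prop :=
  U `<=` K /\ exists V : set 'rV[R]_n, [/\ open V, V x & K `&` V `<=` U].

Definition rx {R : realType} {n : nat} (x : 'rV[R]_n) (U : set 'rV[R]_n) : R :=
  sup [set eucl_dist y x | y in U].

Definition peaks_at {R : realType} {n : nat} (K : set 'rV[R]_n)
  (f : 'rV[R]_n -> R[i]) (x : 'rV[R]_n) : Prop :=
  f x = 1 /\ forall y, K y -> y <> x -> cmod (f y) < 1.

(* Main.v *)
Require Import Defs.
From HB Require Import structures.
From mathcomp Require Import all_boot all_order all_algebra.
From mathcomp Require Import all_classical all_reals all_analysis.
From mathcomp.real_closed Require Import complex.
Import Order.TTheory GRing.Theory Num.Theory.
Import numFieldTopology.Exports numFieldNormedType.Exports.
Local Open Scope classical_set_scope.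
Local Open Scope ring_scope.
From mathcomp Require Import ring lra.

Section Aux.
Variable R : realType.
Implicit Types (z w : R[i]).

Lemma cmod_ge0 z : 0 <= cmod z.
Proof. by case: z => a b; rewrite /cmod /= sqrtr_ge0. Qed.

Lemma cmodD z w : cmod (z + w) <= cmod z + cmod w.
Proof. exact: le_normcD. Qed.

Lemma cmodM z w : cmod (z * w) = cmod z * cmod w.
Proof. exact: ComplexField.Normc.normcM. Qed.

Lemma cmodR (c : R) : cmod (c%:C)%C = `|c|.
Proof. by rewrite /cmod /= expr0n /= addr0 sqrtr_sqr. Qed.

Lemma cmod1 : cmod (1 : R[i]) = 1.
Proof. exact: ComplexField.Normc.normc1. Qed.

Lemma cmodN z : cmod (- z) = cmod z.
Proof. exact: normcN. Qed.

Lemma cmodB z w : cmod (z - w) = cmod (w - z).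
Proof. by rewrite -cmodN opprB. Qed.

Lemma cmod_Re z : `|complex.Re z| <= cmod z.
Proof.
case: z => a b; rewrite /cmod /= -sqrtr_sqr ler_wsqrtr //.
by rewrite lerDl sqr_ge0.
Qed.

Lemma cmod_Im z : `|complex.Im z| <= cmod z.
Proof.
case: z => a b; rewrite /cmod /= -sqrtr_sqr ler_wsqrtr //.
by rewrite lerDr sqr_ge0.
Qed.

Lemma cmod_le_ReIm z : cmod z <= `|complex.Re z| + `|complex.Im z|.
Proof.
case: z => a b; rewrite /cmod /=.
rewrite -[X in _ <= X]ger0_norm ?addr_ge0 // -sqrtr_sqr ler_wsqrtr //.
rewrite sqrrD -[a ^+ 2]real_normK ?num_real // -[b ^+ 2]real_normK ?num_real //.
have := normr_ge0 a; have := normr_ge0 b. nra.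
Qed.

Lemma cmod_eq0 z : cmod z = 0 -> z = 0.
Proof. exact: ComplexField.Normc.eq0_normc. Qed.

Lemma ReB z w : complex.Re (z - w) = complex.Re z - complex.Re w.
Proof. by case: z; case: w. Qed.

Lemma ImB z w : complex.Im (z - w) = complex.Im z - complex.Im w.
Proof. by case: z; case: w. Qed.

Lemma cmod_sum (I : Type) (r : seq I) (P : pred I) (F : I -> R[i]) :
  cmod (\sum_(i <- r | P i) F i) <= \sum_(i <- r | P i) cmod (F i).
Proof.
apply: (big_ind2 (fun a b => cmod a <= b)).
- by rewrite /cmod /= expr0n /= addr0 sqrtr0.
- by move=> a1 a2 b1 b2 h1 h2; apply: le_trans (cmodD _ _) _; exact: lerD.
- by [].
Qed.

Lemma cmod_ReIm2 z e : `|complex.Re z| <= e -> `|complex.Im z| <= e -> cmod z <= 2 * e.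
Proof. move=> h1 h2; apply: le_trans (cmod_le_ReIm z) _; lra. Qed.

End Aux.

Section Dist.
Variables (R : realType) (n : nat).
Implicit Types x y : 'rV[R]_n.

Lemma eucl_dist_ge0 x y : 0 <= eucl_dist x y.
Proof. exact: sqrtr_ge0. Qed.

Lemma eucl_dist_xx x : eucl_dist x x = 0.
Proof.
rewrite /eucl_dist /eucl_norm big1 ?sqrtr0 // => i _.
by rewrite !mxE subrr expr0n.
Qed.

Lemma eucl_dist_eq0 x y : eucl_dist y x = 0 -> y = x.
Proof.
rewrite /eucl_dist /eucl_norm => /eqP; rewrite sqrtr_eq0 => h.
have h0 : \sum_(i < n) (y - x) ord0 i ^+ 2 = 0.
  by apply/le_anti; rewrite h sumr_ge0 // => i _; exact: sqr_ge0.
apply/rowP => i; have := psumr_eq0P (fun i _ => sqr_ge0 _) h0 (i := i) erefl.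
move/eqP; rewrite sqrf_eq0 !mxE subr_eq0 => /eqP.
by rewrite (ord1 0).
Qed.

Lemma sum_continuous (I : Type) (r : seq I) (F : I -> 'rV[R]_n -> R) :
  (forall i, continuous (F i)) -> continuous (fun y => \sum_(i <- r) F i y).
Proof.
move=> hF; elim: r => [|i r IH].
  have -> : (fun y => \sum_(i <- [::]) F i y) = fun=> 0.
    by apply: funext => y; rewrite big_nil.
  exact: cst_continuous.
have -> : (fun y => \sum_(j <- i :: r) F j y) =
          (F i + (fun y => \sum_(j <- r) F j y)).
  by apply: funext => y; rewrite big_cons.
by move=> y; apply: continuousD; [exact: hF | exact: IH].
Qed.

Lemma eucl_dist_cont x : continuous (fun y => eucl_dist y x).
Proof.
move=> y; rewrite /eucl_dist /eucl_norm.
apply: (@continuous_comp _ _ _ (fun y : 'rV[R]_n => \sum_(i < n) (y - x) ord0 i ^+ 2)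
   (@Num.sqrt R)); last exact: sqrt_continuous.
apply: (@sum_continuous _ _ (fun i y => (y - x) ord0 i ^+ 2)) => i.
have -> : (fun y : 'rV[R]_n => (y - x) ord0 i ^+ 2) =
   ((fun y : 'rV[R]_n => y ord0 i) - (fun=> x ord0 i)) \* 
   ((fun y : 'rV[R]_n => y ord0 i) - (fun=> x ord0 i)).
  by apply: funext => z /=; rewrite !mxE expr2.
move=> z; apply: continuousM; apply: continuousB;
  [exact: coord_continuous | exact: cst_continuous | exact: coord_continuous | exact: cst_continuous].
Qed.

Lemma open_dist_lt x r : open [set y | eucl_dist y x < r].
Proof.
apply: (@open_comp _ _ (fun y => eucl_dist y x) [set u | u < r]).
  by move=> y _; exact: eucl_dist_cont.
exact: open_lt.
Qed.

Lemma open_dist_gt x r : open [set y | r < eucl_dist y x].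
Proof.
apply: (@open_comp _ _ (fun y => eucl_dist y x) [set u | r < u]).
  by move=> y _; exact: eucl_dist_cont.
exact: open_gt.
Qed.

Lemma closed_dist_le x r : closed [set y | eucl_dist y x <= r].
Proof.
apply: (@preimage_closed _ _ (fun y => eucl_dist y x) [set u | u <= r]).
  by move=> y _; exact: eucl_dist_cont.
exact: closed_le.
Qed.

End Dist.

Lemma Lex (R : realType) (n : nat) (Om : set 'rV[R]_n) (x w : 'rV[R]_n) (d0 : R) :
  connected Om -> closure Om x -> Om w -> d0 <= eucl_dist w x ->
  forall del, 0 < del -> del <= d0 ->
  exists U, [/\ rel_nbhd (closure Om) U x, del / 2 <= rx x U, rx x U <= del &
     forall y, U y -> eucl_dist y x <= rx x U].
Proof.
move=> cOm clx Omw hw del del0 deld0.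
have [z [Omz z1 z2]] : exists z, [/\ Om z, del / 2 <= eucl_dist z x & eucl_dist z x < del].
  apply: contrapT => nz.
  pose B := Om `&` [set y | eucl_dist y x < del / 2].
  have B0 : B !=set0.
    apply: clx; apply: open_nbhs_nbhs; split; first exact: open_dist_lt.
    by rewrite /= eucl_dist_xx; lra.
  have BO : B = Om.
    apply: cOm => //.
      by exists [set y | eucl_dist y x < del / 2] => //; exact: open_dist_lt.
    exists [set y | eucl_dist y x <= del / 2]; first exact: closed_dist_le.
    apply/seteqP; split => y [Omy hy]; split => //=; first exact: ltW.
    rewrite lt_neqAle hy andbT; apply/negP => /eqP hy'.
    by apply: nz; exists y; split => //; rewrite hy'; lra.
  have : B w by rewrite BO.
  by case => _ /=; lra.
pose U := closure Om `&` [set y | eucl_dist y x < del].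
pose S := [set eucl_dist y x | y in U].
have Sub : ubound S del by move=> r [y [_ hy] <-]; exact: ltW.
have Sne : S !=set0.
  exists (eucl_dist x x), x => //; split => //=; rewrite eucl_dist_xx //.
have Sle : forall y, U y -> eucl_dist y x <= sup S.
  move=> y Uy; apply: ub_le_sup; first by exists del.
  by exists y.
exists U; split.
- split; first by move=> y [].
  exists [set y | eucl_dist y x < del]; split => //; first exact: open_dist_lt.
  by rewrite /= eucl_dist_xx.
- apply: le_trans z1 _; apply: Sle; split => //=.
  exact: subset_closure.
- exact: ge_sup.
- exact: Sle.
Qed.
Lemma asym (R : realType) (K a p s : R) : 0 <= K -> 0 < a -> 1 < p -> 0 < s ->
  exists M : nat, (1 <= M)%N /\ forall j : R, M%:R <= j ->
    j * (K + ln (j + 1)) / s <= (a * j) `^ p.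
Proof.
move=> K0 a0 p1 s0.
set h := (p - 1) / 2.
have h0 : 0 < h by rewrite /h; lra.
have l20 : 0 <= ln (2 : R) by apply: ln_ge0; lra.
set q := s * a `^ p.
have q0 : 0 < q by rewrite /q mulr_gt0 // powR_gt0.
set W := K + ln 2 + h^-1.
have hi : 0 < h^-1 by rewrite invr_gt0.
have W0 : 0 <= W by rewrite /W; lra.
set Z0 := W / q + 1.
have Z01 : 1 <= Z0 by rewrite /Z0 lerDr divr_ge0 // ltW.
have WZ : W = (Z0 - 1) * q by rewrite /Z0 addrK divfK // gt_eqF.
have b0 : 0 <= Z0 `^ h^-1 by exact: powR_ge0.
exists (maxn 1 (Num.Def.archi_bound (Z0 `^ h^-1))); split; first exact: leq_maxl.
move=> j hj.
have j1 : 1 <= j by apply: le_trans hj; rewrite ler1n leq_maxl.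
have jb : Z0 `^ h^-1 <= j.
  apply: le_trans hj; apply: le_trans (ltW (archi_boundP b0)) _.
  by rewrite ler_nat leq_maxr.
have j0 : 0 < j by lra.
set Z := j `^ h.
have ZZ0 : Z0 <= Z.
  have := @ge0_ler_powR R h (ltW h0) _ _ b0 (ltW j0) jb.
  rewrite -powRrM mulVf ?gt_eqF // powRr1 //; lra.
have Z1 : 1 <= Z by lra.
have Zpos : 0 < Z by lra.
have jeps : j `^ (p - 1) = Z * Z.
  have -> : p - 1 = h + h by rewrite /h; lra.
  rewrite powRD //; apply/implyP => _; exact: lt0r_neq0.
have lnj : ln j = ln Z / h.
  by rewrite /Z ln_powR mulrAC divff ?mul1r // gt_eqF.
have lnZ : ln Z < Z by exact: ln_sublinear.
have lnj1 : ln (j + 1) <= ln 2 + ln j.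
  have : ln (j + 1) <= ln (2 * j) by rewrite ler_ln ?posrE; lra.
  by rewrite lnM ?posrE //; lra.
have lnjZ : ln j <= Z / h.
  by rewrite lnj ler_pM2r ?invr_gt0 //; exact: ltW.
rewrite powRM ?(ltW a0) ?(ltW j0) // -(mulr_powRB1 (ltW j0)) ?(lt_trans ltr01 p1) // jeps.
have hW : K + ln (j + 1) <= W * Z.
  apply: (le_trans (y := K + ln 2 + Z / h)); first lra.
  rewrite /W !mulrDl -!addrA lerD //.
    by rewrite ler_peMr.
  rewrite lerD //; first by rewrite ler_peMr.
  by rewrite mulrC.
have hK : K + ln (j + 1) <= q * (Z * Z).
  apply: le_trans hW _; rewrite WZ.
  have hz : Z0 - 1 <= Z by lra.
  have := ler_wpM2r (ltW Zpos) (ler_wpM2r (ltW q0) hz).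
  move=> hh; apply: le_trans hh _; rewrite le_eqVlt; apply/orP; left; apply/eqP; ring.
rewrite ler_pdivrMr //; apply: le_trans (ler_wpM2l (ltW j0) hK) _.
rewrite /q le_eqVlt; apply/orP; left; apply/eqP; ring.
Qed.

Lemma sup_lim (R : realType) (a e : nat -> R) :
  (forall N, 0 <= e N) -> (forall N P, (N <= P)%N -> `|a P - a N| <= e N) ->
  forall N, `|a N - sup (range (fun P => a P - e P))| <= e N.
Proof.
move=> e0 hc N; set S := range _.
have hub : forall P, a P - e P <= a 0%N + e 0%N.
  move=> P; have := hc 0%N P (leq0n P) => /ler_distlDr; have := e0 P; lra.
have hS : has_ubound S by exists (a 0%N + e 0%N) => r [P _ <-].
have S0 : S !=set0 by exists (a 0%N - e 0%N), 0%N.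
have lo : a N - e N <= sup S by apply: ub_le_sup => //; exists N.
have hi : sup S <= a N + e N.
  apply: ge_sup => // r [P _ <-].
  case: (leqP N P) => hNP.
    have := hc N P hNP => /ler_distlDr; have := e0 P; lra.
  have := hc P N (ltnW hNP) => /ler_distlCBl; have := e0 N; lra.
rewrite ler_distl; apply/andP; split; lra.
Qed.

Lemma lim_le (R : realType) (r G B : R) (m M : nat) :
  0 <= B -> (1 <= M)%N ->
  (forall N, (m <= N)%N -> r <= G + B / (N%:R + M%:R)) -> r <= G.
Proof.
move=> B0 M1 h; rewrite leNgt; apply/negP => Gr.
have d0 : 0 < r - G by lra.
have b0 : 0 <= B / (r - G) by rewrite divr_ge0 // ltW.
set N := maxn m (Num.Def.archi_bound (B / (r - G))).
have hN := h N (leq_maxl _ _).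
have NM0 : 0 < N%:R + M%:R :> R.
  by apply: (@lt_le_trans _ _ (M%:R)); rewrite ?ltr0n ?lerDr //.
have : B / (r - G) < N%:R + M%:R.
  apply: lt_le_trans (archi_boundP b0) _.
  by rewrite -natrD ler_nat; exact: leq_trans (leq_maxr m _) (leq_addr M N).
rewrite ltr_pdivrMr // => hB.
have : B / (N%:R + M%:R) < r - G by rewrite ltr_pdivrMr // mulrC.
lra.
Qed.

Lemma sum_ite (R : realType) (r : seq nat) (m : nat) (a : R) :
  0 <= a -> uniq r -> \sum_(k <- r) (if k == m then a else 0) <= a.
Proof.
move=> a0; elim: r => [|i r IH] /=; first by rewrite big_nil.
move=> /andP[ir ur]; rewrite big_cons.
case: eqP => [eim|_]; last by rewrite add0r IH.
rewrite big1_seq ?addr0 // => k /andP[_ kr].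
by case: eqP => // km; move: ir; rewrite eim -km kr.
Qed.

Lemma csum (R : realType) (M : nat) (a b : nat) : (1 <= M)%N -> (a <= b)%N ->
  \sum_(a <= k < b) (M%:R / ((k + M)%:R * ((k + M)%:R + 1)) : R) =
  M%:R / (a%:R + M%:R) - M%:R / (b%:R + M%:R).
Proof.
move=> M1; elim: b => [|b IH].
  by rewrite leqn0 => /eqP ->; rewrite big_geq // subrr.
rewrite leq_eqVlt => /orP[/eqP ->|hab]; first by rewrite big_geq // subrr.
rewrite big_nat_recr //= IH //.
have -> : (b.+1)%:R + M%:R = (b + M)%:R + 1 :> R by rewrite -natrD addSn -natr1.
have -> : b%:R + M%:R = (b + M)%:R :> R by rewrite natrD.
have X0 : 0 < (b + M)%:R :> R by rewrite ltr0n addn_gt0 M1 orbT.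
set X := (b + M)%:R.
have X1 : 0 < X + 1 by lra.
rewrite -addrA; congr (_ + _); field.
by rewrite -natrD -/X; apply/andP; split; exact: lt0r_neq0.
Qed.

Lemma setup (R : realType) (s t A G C d0 : R) :
  0 < s -> s <= 1 -> 0 < t -> t < 1 -> 0 < A -> A < 1 -> 0 < G -> G < 1 -> 0 < C ->
  0 < d0 -> d0 <= 2^-1 ->
  exists (M : nat) (La : nat -> R), [/\ (1 <= M)%N,
    (forall k, 2 * expR (- La k) <= d0),
    (forall k, 0 <= La k),
    (forall k, C * (La k) `^ t <= G * (k + M)%:R / 2) &
    [/\ (forall i k, (i < k)%N ->
          s * (2 * ln 2 - ln A - (La k - La i)) <= ln G - 2 * ln 2 - ln ((k + M)%:R + 1)),
        (forall k, 0 <= ln ((k + M)%:R + 1 : R)) &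
        exists2 kap : R, 0 < kap & forall k, k%:R * kap <= La k]].
Proof.
move=> s0 s1 t0 t1 A0 A1 G0 G1 C0 d00 d0h.
have l20 : 0 < ln (2 : R) by apply: ln_gt0; lra.
have lA : ln A < 0 by apply: ln_lt0; lra.
have lG : ln G < 0 by apply: ln_lt0; lra.
have ld0 : ln d0 <= - ln 2.
  rewrite -lnV ?posrE //; rewrite ler_ln ?posrE ?invr_gt0 //.
set Kc := 6 * ln 2 - ln A - ln G - ln d0.
have Kc0 : 5 * ln 2 <= Kc by rewrite /Kc; lra.
have [M [M1 hM]] := @asym R Kc (G / (2 * C)) t^-1 s ltac:(lra)
  ltac:(by rewrite divr_gt0 // mulr_gt0) ltac:(by rewrite invf_gt1) s0.
pose jr k := (k + M)%:R : R.
have jr1 : forall k, 1 <= jr k.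
  by move=> k; rewrite /jr ler1n addn_gt0 M1 orbT.
pose La k := jr k * (Kc + ln (jr k + 1)) / s.
have lnj0 : forall k, 0 <= ln (jr k + 1).
  by move=> k; apply: ln_ge0; have := jr1 k; lra.
have Lage : forall k, Kc + ln (jr k + 1) <= La k.
  move=> k; rewrite /La ler_pdivlMr //.
  have X0 : 0 <= Kc + ln (jr k + 1) by have := lnj0 k; lra.
  have h1 := ler_wpM2l X0 s1; have h2 := ler_wpM2l X0 (jr1 k).
  rewrite mulr1 in h1; rewrite mulr1 in h2; rewrite mulrC; lra.
have Lak : forall k, k%:R * Kc <= La k.
  move=> k; rewrite /La ler_pdivlMr //.
  have hk : k%:R <= jr k by rewrite /jr ler_nat leq_addr.
  have X0 : 0 <= Kc + ln (jr k + 1) by have := lnj0 k; lra.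
  have h1 := ler_wpM2r X0 hk.
  have h2 : k%:R * Kc <= k%:R * (Kc + ln (jr k + 1)).
    by rewrite ler_wpM2l //; have := lnj0 k; lra.
  have h3 : k%:R * Kc * s <= k%:R * Kc.
    by rewrite ler_piMr // mulr_ge0 //; lra.
  lra.
have Lamono : forall i k, (i <= k)%N -> La i <= La k.
  move=> i k ik; rewrite /La ler_pM2r ?invr_gt0 //.
  have hj : jr i <= jr k by rewrite /jr ler_nat leq_add2r.
  have hl : ln (jr i + 1) <= ln (jr k + 1).
    by rewrite ler_ln ?posrE; have := jr1 i; have := jr1 k; lra.
  have X0 : 0 <= Kc + ln (jr i + 1) by have := lnj0 i; lra.
  apply: le_trans (ler_wpM2r X0 hj) _.
  have j0 : 0 <= jr k by have := jr1 k; lra.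
  rewrite ler_wpM2l //; lra.
have Ladiff : forall k, 4 * ln 2 - ln A - ln G + ln (jr k.+1 + 1) <= s * (La k.+1 - La k).
  move=> k.
  have -> : s * (La k.+1 - La k) =
     jr k.+1 * (Kc + ln (jr k.+1 + 1)) - jr k * (Kc + ln (jr k + 1)).
    by rewrite /La; field; rewrite gt_eqF.
  have -> : jr k.+1 = jr k + 1 by rewrite /jr addSn -natr1.
  have j1 := jr1 k.
  have hl : ln (jr k + 1) <= ln (jr k + 1 + 1).
    by rewrite ler_ln ?posrE; lra.
  have hl2 : ln (jr k + 1 + 1) <= ln 2 + ln (jr k + 1).
    rewrite -lnM ?posrE; try lra.
    by rewrite ler_ln ?posrE; lra.
  have h3 : (jr k + 1) * ln (jr k + 1) <= (jr k + 1) * ln (jr k + 1 + 1).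
    by rewrite ler_wpM2l //; lra.
  have : 7 * ln 2 - ln A - ln G <= Kc by rewrite /Kc; lra.
  move=> hK.
  have e1 : (jr k + 1) * (Kc + ln (jr k + 1 + 1)) - jr k * (Kc + ln (jr k + 1)) =
     Kc + ln (jr k + 1) + ((jr k + 1) * ln (jr k + 1 + 1) - (jr k + 1) * ln (jr k + 1)).
    by ring.
  rewrite e1; lra.
have Labnd : forall k, C * (La k) `^ t <= G * jr k / 2.
  move=> k.
  have hjk : M%:R <= jr k by rewrite /jr ler_nat leq_addl.
  have hk := hM (jr k) hjk.
  have La0 : La k \in Num.nneg.
    by rewrite nnegrE; apply: le_trans (Lage k); have := lnj0 k; lra.
  have Y0 : (G / (2 * C) * jr k) `^ t^-1 \in Num.nneg by rewrite nnegrE powR_ge0.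
  have := @ge0_ler_powR R t (ltW t0) (La k) _ La0 Y0 hk.
  rewrite -powRrM mulVf ?gt_eqF // powRr1; last first.
    by rewrite mulr_ge0 ?divr_ge0 ?mulr_ge0 //; try lra; have := jr1 k; lra.
  move=> h; rewrite -ler_pdivlMl //; apply: le_trans h _.
  by rewrite le_eqVlt; apply/orP; left; apply/eqP; field; rewrite gt_eqF.
pose dl k := 2 * expR (- La k).
have dlpos : forall k, 0 < dl k by move=> k; rewrite /dl mulr_gt0 // expR_gt0.
have dlle : forall k, dl k <= d0.
  move=> k; rewrite /dl -ler_pdivlMl //.
  have -> : 2^-1 * d0 = expR (ln (d0 / 2)) by rewrite lnK ?posrE ?divr_gt0 // mulrC.
  rewrite ler_expR ln_div ?posrE //.
  have := Lage k; have := lnj0 k; rewrite /Kc; lra.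
exists M, La; split => //.
- by move=> k; apply: le_trans (Lage k); have := lnj0 k; lra.
- split.
  + move=> i k ik; case: k ik => // k ik.
    have hmono : La i <= La k := Lamono i k ik.
    have hd := Ladiff k.
    have X0 : 0 <= 2 * ln 2 - ln A by lra.
    have h1 : s * (2 * ln 2 - ln A) <= 2 * ln 2 - ln A := ler_piMl X0 s1.
    have h2 : s * (La k.+1 - La k) <= s * (La k.+1 - La i).
      by apply: ler_wpM2l; [exact: ltW s0 | lra].
    have e3 : s * (2 * ln 2 - ln A - (La k.+1 - La i)) =
      s * (2 * ln 2 - ln A) - s * (La k.+1 - La i) by ring.
    rewrite e3; rewrite /jr in hd; lra.
  + by move=> k; have := lnj0 k; rewrite /jr.
  + exists Kc; first lra.
    exact: Lak.
Qed.
Theorem theorem1p1 (R : realType) (n : nat) (Om : set 'rV[R]_n)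
  (x : 'rV[R]_n) (E : set ('rV[R]_n -> R[i]))
  (alpha s t A C : R) :
  bounded_domain Om ->
  closure Om x ->
  closed_subspace_CK (closure Om) E ->
  0 < alpha < 1 -> 0 < s <= 1 -> 0 < t < 1 -> 0 < A < 1 -> 0 < C ->
  (forall U : set 'rV[R]_n, rel_nbhd (closure Om) U x -> rx x U < 1 ->
     exists fU : 'rV[R]_n -> R[i],
       [/\ E fU,
           fU x = 1,
           (forall y, closure Om y -> ~ U y -> cmod (fU y) <= alpha),
           (forall y, U y -> cmod (fU y) <= C * (ln (1 / rx x U)) `^ t) &
           (forall eps : R, 0 < eps < 1 ->
              forall y, closure Om y -> eucl_dist y x < A * rx x U * eps ->
                cmod (fU y) < 1 + eps `^ s)]) ->
  exists F : 'rV[R]_n -> R[i], E F /\ peaks_at (closure Om) F x.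
Proof.
move=> [Om0 oOm cOm bOm] clx [Econt E0 ED EZ Elim].
move=> /andP[al0 al1] /andP[s0 s1] /andP[t0 t1] /andP[A0 A1] C0 H.
set K := closure Om.
have [triv|[w [Kw wx]]] : (forall w, K w -> w = x) \/ exists w, K w /\ w <> x.
  case: (pselect (exists w, K w /\ w <> x)) => [h|h]; [by right|left].
  move=> w Kw; apply: contrapT => wx; apply: h; by exists w.
  have rxK : rx x K = 0.
    rewrite /rx; have -> : [set eucl_dist y x | y in K] = [set 0].
      apply/seteqP; split => r.
        by case=> y Ky <-; rewrite (triv y Ky) eucl_dist_xx.
      by move=> ->; exists x => //; exact: eucl_dist_xx.
    exact: sup1.
  have nK : rel_nbhd K K x.
    split; first by [].
    exists setT; split; [exact: openT | by [] | by move=> y []].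
  have rK1 : rx x K < 1 by rewrite rxK.
  have [f [Ef f1 _ _ _]] := H K nK rK1.
  exists f; split => //; split => // y Ky yx; by have := triv y Ky.
have dwx : 0 < eucl_dist w x.
  rewrite lt_neqAle eucl_dist_ge0 andbT; apply/eqP => h; apply: wx.
  exact: eucl_dist_eq0 (esym h).
have [w0 [Omw0 hw0]] : exists w0, Om w0 /\ eucl_dist w x / 2 < eucl_dist w0 x.
  have := Kw [set y | eucl_dist w x / 2 < eucl_dist y x] _.
  case => [|w0 [? ?]]; last by exists w0.
  apply: open_nbhs_nbhs; split; [exact: open_dist_gt | rewrite /=; lra].
set dw := eucl_dist w0 x.
have dw0 : 0 < dw by rewrite /dw; clear -dwx hw0; lra.
set d0 := Num.min dw (2^-1).
have d00 : 0 < d0 by rewrite lt_min dw0 invr_gt0 ltr0n.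
have d0w : d0 <= dw by rewrite ge_min lexx.
have d0h : d0 <= 2^-1 by rewrite ge_min lexx orbT.
set G := 1 - alpha.
have G0 : 0 < G by rewrite /G; clear -al1; lra.
have G1 : G < 1 by rewrite /G; clear -al0; lra.
have [M [La [M1 dlle La0 Labnd [Lad lnj0 [kap kap0 Lak]]]]] :=
  @setup R s t A G C d0 s0 s1 t0 t1 A0 A1 G0 G1 C0 d00 d0h.
pose jr k := (k + M)%:R : R.
have jr1 : forall k, 1 <= jr k.
  by move=> k; rewrite /jr ler1n addn_gt0 M1 orbT.
pose dl k := 2 * expR (- La k).
have dlpos : forall k, 0 < dl k by move=> k; rewrite /dl mulr_gt0 // expR_gt0.
have /choice [g Hg] : forall k, exists p : set 'rV[R]_n * ('rV[R]_n -> R[i]),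
   [/\ E p.2, p.2 x = 1, (forall y, K y -> ~ p.1 y -> cmod (p.2 y) <= alpha),
       (forall y, p.1 y -> cmod (p.2 y) <= G * jr k / 2) &
       [/\ (forall eps, 0 < eps < 1 -> forall y, K y ->
              eucl_dist y x < A * rx x p.1 * eps -> cmod (p.2 y) < 1 + eps `^ s),
           (forall y, p.1 y -> eucl_dist y x <= rx x p.1) &
           expR (- La k) <= rx x p.1 <= 2 * expR (- La k)]].
  move=> k.
  have [U [nU r1 r2 hU]] := @Lex R n Om x w0 d0 cOm clx Omw0 d0w _ (dlpos k) (dlle k).
  have rx1 : rx x U < 1.
    apply: le_lt_trans r2 _; rewrite /dl; have h := dlle k; clear -h d0h; lra.
  have [f [Ef f1 h2 h3 h4]] := H U nU rx1.
  have edl : dl k / 2 = expR (- La k) by rewrite /dl mulrAC divff ?mul1r.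
  rewrite edl in r1.
  have rho0 : 0 < rx x U by apply: lt_le_trans r1; exact: expR_gt0.
  exists (U, f); split => //=.
    move=> y Uy; apply: le_trans (h3 y Uy) _.
    have L0 : ln (1 / rx x U) \in Num.nneg.
      rewrite nnegrE; apply: ln_ge0; rewrite div1r invf_ge1 //.
      by apply: le_trans r2 _; rewrite /dl; have h := dlle k; clear -h d0h; lra.
    have La0' : La k \in Num.nneg by rewrite nnegrE.
    have LL : ln (1 / rx x U) <= La k.
      rewrite div1r lnV ?posrE // lerNl -[X in X <= _]expRK ler_ln ?posrE ?expR_gt0 //.
    apply: le_trans (Labnd k); rewrite ler_pM2l //.
    exact: (@ge0_ler_powR R t (ltW t0) _ _ L0 La0' LL).
  by split => //; apply/andP; split => //; rewrite -edl.
pose U k := (g k).1.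
pose f k := (g k).2.
have fE : forall k, E (f k) by move=> k; case: (Hg k).
have f1 : forall k, f k x = 1 by move=> k; case: (Hg k).
have fout : forall k y, K y -> ~ U k y -> cmod (f k y) <= alpha.
  by move=> k; case: (Hg k).
have fU : forall k y, U k y -> cmod (f k y) <= G * jr k / 2.
  by move=> k; case: (Hg k).
have fnear : forall k eps, 0 < eps < 1 -> forall y, K y ->
    eucl_dist y x < A * rx x (U k) * eps -> cmod (f k y) < 1 + eps `^ s.
  by move=> k; case: (Hg k) => _ _ _ _ [].
have Ud : forall k y, U k y -> eucl_dist y x <= rx x (U k).
  by move=> k; case: (Hg k) => _ _ _ _ [].
have rhob : forall k, expR (- La k) <= rx x (U k) <= 2 * expR (- La k).
  by move=> k; case: (Hg k) => _ _ _ _ [].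
have l20 : 0 < ln (2:R) by apply: ln_gt0; rewrite ltr1n.
have lG : ln G < 0 by apply: ln_lt0; rewrite G0 G1.
have near : forall i k y, (i < k)%N -> K y -> U k y ->
    cmod (f i y) < 1 + G / (4 * ((k + M)%:R + 1)).
  move=> i k y ik Ky Uky.
  have /andP[ri1 ri2] := rhob i; have /andP[rk1 rk2] := rhob k.
  have ri0 : 0 < rx x (U i) by apply: lt_le_trans (expR_gt0 _) ri1.
  have rk0 : 0 < rx x (U k) by apply: lt_le_trans (expR_gt0 _) rk1.
  have lrk : ln (rx x (U k)) <= ln 2 - La k.
    by move: rk2; rewrite -ler_ln ?posrE ?mulr_gt0 ?expR_gt0 // lnM ?posrE ?expR_gt0 // expRK.
  have lri : - La i <= ln (rx x (U i)).
    by move: ri1; rewrite -ler_ln ?posrE ?expR_gt0 // expRK.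
  set eps := 2 * rx x (U k) / (A * rx x (U i)).
  have eps0 : 0 < eps by rewrite /eps divr_gt0 ?mulr_gt0.
  have lneps : ln eps <= 2 * ln 2 - ln A - (La k - La i).
    rewrite /eps ln_div ?posrE ?mulr_gt0 // !lnM ?posrE //.
    clear -lrk lri; lra.
  have slneps : s * ln eps <= ln G - 2 * ln 2 - ln ((k + M)%:R + 1).
    apply: le_trans (Lad i k ik); by apply: ler_wpM2l => //; exact: ltW s0.
  have lj := lnj0 k.
  have lneps0 : ln eps < 0.
    have : s * ln eps < 0 by clear -slneps l20 lG lj; lra.
    by rewrite pmulr_rlt0.
  have eps1 : eps < 1.
    by move: lneps0; rewrite -ln1 ltr_ln ?posrE.
  have dlt : eucl_dist y x < A * rx x (U i) * eps.
    have -> : A * rx x (U i) * eps = 2 * rx x (U k).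
      by rewrite /eps; field; rewrite !gt_eqF.
    apply: le_lt_trans (Ud _ _ Uky) _; clear -rk0; lra.
  have epsb : 0 < eps < 1 by rewrite eps0 eps1.
  have := fnear i eps epsb y Ky dlt => hlt; apply: lt_le_trans hlt _.
  rewrite lerD2l /powR gt_eqF //=.
  have j1 : 1 <= (k + M)%:R :> R by rewrite ler1n addn_gt0 M1 orbT.
  have e4 : ln (G / (4 * ((k + M)%:R + 1))) = ln G - 2 * ln 2 - ln ((k + M)%:R + 1).
    rewrite ln_div ?posrE ?mulr_gt0 //; try (clear -j1; lra).
    rewrite lnM ?posrE //; try (clear -j1; lra).
    have -> : (4 : R) = 2 * 2 by rewrite -natrM.
    rewrite lnM ?posrE //; clear; lra.
  rewrite -[X in _ <= X]lnK ?posrE ?divr_gt0 ?mulr_gt0 //; try (clear -j1; lra).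
  rewrite e4 ler_expR; exact: slneps.
have distpos : forall y, y <> x -> 0 < eucl_dist y x.
  move=> y yx; rewrite lt_neqAle eucl_dist_ge0 andbT; apply/eqP => h; apply: yx.
  exact: eucl_dist_eq0 (esym h).
have fin : forall y, y <> x -> exists k0, forall k, U k y -> (k < k0)%N.
  move=> y yx; have d0y := distpos y yx.
  set d := eucl_dist y x in d0y *.
  have b0 : 0 <= 2 / (d * kap) by rewrite divr_ge0 // ltW // mulr_gt0.
  exists (Num.Def.archi_bound (2 / (d * kap))) => k Uk.
  rewrite ltnNge; apply/negP => hk.
  have hk' : 2 / (d * kap) < k%:R.
    by apply: lt_le_trans (archi_boundP b0) _; rewrite ler_nat.
  have h1 : 2 < k%:R * (d * kap) by rewrite -ltr_pdivrMr // mulr_gt0.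
  have /andP[_ hr] := rhob k.
  have h2 : d <= 2 * expR (- La k) := le_trans (Ud k y Uk) hr.
  rewrite expRN in h2.
  have h3 : d * expR (La k) <= 2 by move: h2; rewrite ler_pdivlMr ?expR_gt0.
  have h4 : La k < expR (La k) by have := expR_ge1Dx (La k); clear; lra.
  have h5 := Lak k.
  have h6 : d * (k%:R * kap) < d * expR (La k).
    by rewrite ltr_pM2l //; clear -h4 h5; lra.
  have e : k%:R * (d * kap) = d * (k%:R * kap) by ring.
  clear -h1 h3 h6 e; lra.
have last : forall y, y <> x -> (exists k, U k y) ->
    exists m, U m y /\ forall j, (m < j)%N -> ~ U j y.
  move=> y yx [k1 hk1]; have [k0 hk0] := fin y yx.
  have exP : exists i, `[< U i y >] by exists k1; exact: asboolT.
  have ubP : forall i, `[< U i y >] -> (i <= k0)%N.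
    by move=> i /asboolP /hk0 /ltnW.
  case: (ex_maxnP exP ubP) => m /asboolP Um hm.
  exists m; split => // j mj Uj.
  by have := hm j (asboolT Uj); rewrite leqNgt mj.
have nl2 : forall k y, K y -> ~ (U k y /\ forall j, (k < j)%N -> ~ U j y) ->
    cmod (f k y) <= 2.
  move=> k y Ky nl.
  case: (pselect (U k y)) => Uk.
    have [j [kj Uj]] : exists j, (k < j)%N /\ U j y.
      apply: contrapT => hn; apply: nl; split => // j kj Uj; apply: hn; by exists j.
    have h := near k j y kj Ky Uj.
    have j1 : 1 <= (j + M)%:R :> R by rewrite ler1n addn_gt0 M1 orbT.
    have hb : G / (4 * ((j + M)%:R + 1)) <= 1.
      rewrite ler_pdivrMr ?mulr_gt0 //; try (clear -j1; lra).
      clear -j1 G1; lra.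
    clear -h hb; lra.
  have h := fout k y Ky Uk; clear -h al1; lra.
have Mr1 : 1 <= M%:R :> R by rewrite ler1n.
pose c k := M%:R / ((k + M)%:R * ((k + M)%:R + 1)) : R.
have jpos : forall k, 0 < (k + M)%:R :> R.
  by move=> k; rewrite ltr0n addn_gt0 M1 orbT.
have c0 : forall k, 0 <= c k.
  move=> k; have jk := jpos k; rewrite /c; apply: divr_ge0.
    exact: le_trans ler01 Mr1.
  by apply: mulr_ge0; [exact: ltW jk | clear -jk; lra].
pose u N y := \sum_(0 <= k < N) ((c k)%:C)%C * f k y.
pose e N := 3 * (M%:R / (N%:R + M%:R)) : R.
have NMpos : forall N, 0 < N%:R + M%:R :> R.
  by move=> N; rewrite -natrD ltr0n addn_gt0 M1 orbT.
have cmodc : forall k z, cmod (((c k)%:C)%C * z) = c k * cmod z.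
  by move=> k z; rewrite cmodM cmodR ger0_norm.
have cauchy : forall y, K y -> forall N P, (N <= P)%N -> cmod (u P y - u N y) <= e N.
  move=> y Ky N P NP.
  have -> : u P y - u N y = \sum_(N <= k < P) ((c k)%:C)%C * f k y.
    by rewrite /u (big_cat_nat (leq0n N) NP) /= addrAC subrr add0r.
  apply: le_trans (cmod_sum _ _ _ _ _) _.
  have [m hm] : exists m, forall k, (N <= k)%N ->
      c k * cmod (f k y) <= 2 * c k + (if k == m then M%:R / (N%:R + M%:R) else 0).
    case: (pselect (exists m, U m y /\ forall j, (m < j)%N -> ~ U j y)) =>
        [[m [Um lm]]|nl].
      exists m => k Nk.
      case: eqP => [km|kmn].
        rewrite km; rewrite km in Nk.
        have h1 : c m * cmod (f m y) <= c m * (G * jr m / 2).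
          by apply: ler_wpM2l; [exact: c0 | exact: fU].
        have e1 : c m * (G * jr m / 2) = G / 2 * (M%:R / ((m + M)%:R + 1)).
          rewrite /c /jr; field.
          have jm := jpos m; rewrite natrD in jm.
          by apply/andP; split; apply/eqP; clear -jm; lra.
        have h2 : M%:R / ((m + M)%:R + 1) <= M%:R / (N%:R + M%:R) :> R.
          apply: ler_wpM2l; first by clear -Mr1; lra.
          have jm := jpos m.
          rewrite lef_pV2 ?posrE; last 2 first.
          - by clear -jm; lra.
          - exact: NMpos.
          by rewrite -natrD natr1 ler_nat leqW // leq_add2r.
        have h3 : 0 <= M%:R / ((m + M)%:R + 1) :> R.
          have jm := jpos m.
          by apply: divr_ge0; [clear -Mr1; lra | clear -jm; lra].
        have h4 := c0 m.
        rewrite e1 in h1; clear -h1 h2 h3 h4 G0 G1; nra.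
      rewrite addr0 [X in _ <= X]mulrC ler_wpM2l //; apply: nl2 Ky _ => -[Uk lk].
      case: (ltngtP k m) => [km|mk|km]; first by apply: (lk m km).
        by apply: (lm k mk).
      exact: kmn km.
    exists 0%N => k Nk.
    have h : c k * cmod (f k y) <= 2 * c k.
      rewrite [X in _ <= X]mulrC ler_wpM2l //; apply: nl2 Ky _ => hl; apply: nl.
      by exists k.
    by apply: le_trans h _; rewrite lerDl; case: eqP.
  apply: (@le_trans _ _ (\sum_(N <= k < P) (2 * c k +
       (if k == m then M%:R / (N%:R + M%:R) else 0)))).
    by apply: ler_sum_nat => k /andP[Nk _]; rewrite cmodc; exact: hm.
  rewrite big_split /= -mulr_sumr (@csum R M N P M1 NP).
  have hs := @sum_ite R (index_iota N P) m (M%:R / (N%:R + M%:R))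
     ltac:(by apply: divr_ge0; [clear -Mr1; lra | exact: ltW (NMpos N)])
     ltac:(by rewrite /index_iota; exact: iota_uniq).
  have hP : 0 <= M%:R / (P%:R + M%:R) :> R.
    by apply: divr_ge0; [clear -Mr1; lra | exact: ltW (NMpos P)].
  rewrite /e; clear -hs hP; lra.
pose Fr y := sup (range (fun P => complex.Re (u P y) - e P)).
pose Fi y := sup (range (fun P => complex.Im (u P y) - e P)).
pose F y := (Fr y +i* Fi y)%C.
have e0 : forall N, 0 <= e N.
  move=> N; have hN := NMpos N; rewrite /e; apply: mulr_ge0 => //.
have conv : forall y, K y -> forall N, cmod (u N y - F y) <= 2 * e N.
  move=> y Ky N; apply: cmod_ReIm2.
    rewrite ReB /F /=.
    apply: (@sup_lim R (fun P => complex.Re (u P y)) e e0) => N' P NP.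
    by rewrite -ReB; exact: le_trans (cmod_Re _ _) (cauchy y Ky N' P NP).
  rewrite ImB /F /=.
  apply: (@sup_lim R (fun P => complex.Im (u P y)) e e0) => N' P NP.
  by rewrite -ImB; exact: le_trans (cmod_Im _ _) (cauchy y Ky N' P NP).
have uE : forall N, E (u N).
  elim=> [|N IH].
    have -> : u 0%N = fun _ => 0 by apply: funext => y; rewrite /u big_geq.
    exact: E0.
  have -> : u N.+1 = fun y => u N y + ((c N)%:C)%C * f N y.
    by apply: funext => y; rewrite /u big_nat_recr.
  by apply: ED => //; apply: EZ.
have EF : E F.
  apply: (Elim u F uE) => eps eps0.
  have b0 : 0 <= 6 * M%:R / eps.
    by apply: divr_ge0; [apply: mulr_ge0; [by [] | exact: ler0n] | exact: ltW].
  exists (Num.Def.archi_bound (6 * M%:R / eps)) => k hk y Ky.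
  apply: le_lt_trans (conv y Ky k) _.
  have hk' : 6 * M%:R / eps < k%:R.
    by apply: lt_le_trans (archi_boundP b0) _; rewrite ler_nat.
  have h1 : 6 * M%:R < k%:R * eps by rewrite -ltr_pdivrMr.
  have h2 : M%:R / (k%:R + M%:R) < eps / 6.
    rewrite ltr_pdivrMr ?NMpos //.
    have e1 : eps / 6 * (k%:R + M%:R) = (k%:R * eps) / 6 + (M%:R * eps) / 6 by ring.
    have h3 : 0 <= M%:R * eps :> R by apply: mulr_ge0; [exact: ler0n | exact: ltW].
    rewrite e1; clear -h1 h3; lra.
  rewrite /e; clear -h2; lra.
have NMge : forall N, 0 <= M%:R / (N%:R + M%:R) :> R.
  by move=> N; apply: divr_ge0; [exact: ler0n | exact: ltW (NMpos N)].
have csum0 : forall N, \sum_(0 <= k < N) c k = 1 - M%:R / (N%:R + M%:R).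
  move=> N; rewrite (@csum R M 0 N M1 (leq0n N)) add0r divff //.
  by have := NMpos 0%N; rewrite add0r => /lt0r_neq0.
have ux : forall N, u N x = ((1 - M%:R / (N%:R + M%:R))%:C)%C.
  move=> N; rewrite /u.
  under eq_bigr do rewrite f1 mulr1.
  by rewrite -rmorph_sum csum0.
have Fx : F x = 1.
  apply/eqP; rewrite -subr_eq0; apply/eqP; apply: cmod_eq0.
  apply/le_anti; rewrite cmod_ge0 andbT.
  apply: (@lim_le R _ 0 (7 * M%:R) 0 M) => //.
  move=> N _.
  have -> : F x - 1 = (F x - u N x) + (u N x - 1) by rewrite addrA subrK.
  apply: le_trans (cmodD _ _ _) _.
  rewrite cmodB.
  have h1 := conv x clx N.
  have -> : u N x - 1 = ((- (M%:R / (N%:R + M%:R)))%:C)%C.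
    by rewrite ux rmorphB rmorph1 rmorphN /= addrAC subrr add0r.
  rewrite cmodR normrN ger0_norm //.
  have h2 := NMge N.
  move: h1; rewrite /e; clear; lra.
exists F; split => //; split => // y Ky yx.
have hG : G = 1 - alpha by [].
case: (pselect (exists k, U k y)) => [ex|nex]; last first.
  have hb : forall N, cmod (u N y) <= alpha.
    move=> N; apply: le_trans (cmod_sum _ _ _ _ _) _.
    apply: (@le_trans _ _ (\sum_(0 <= k < N) c k * alpha)).
      apply: ler_sum_nat => k _; rewrite cmodc ler_wpM2l //.
      by apply: fout => // Uk; apply: nex; exists k.
    rewrite -mulr_suml csum0; have := NMge N.
    by move=> h; apply: ler_piMl; [exact: ltW | clear -h; lra].
  have : cmod (F y) <= alpha.
    apply: (@lim_le R _ alpha (6 * M%:R) 0 M) => //.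
    move=> N _.
    have -> : F y = u N y + (F y - u N y) by rewrite addrC subrK.
    apply: le_trans (cmodD _ _ _) _; rewrite cmodB.
    have h1 := conv y Ky N; have h2 := hb N.
    move: h1 h2; rewrite /e; clear; lra.
  by move=> h; apply: le_lt_trans h al1.
have [m [Um lm]] := last y yx ex.
have jm := jpos m.
have jm' : 0 < m%:R + M%:R :> R by rewrite -natrD.
have jm1 : 0 < (m + M)%:R + 1 :> R by clear -jm; lra.
have hT : (m.+1)%:R + M%:R = (m + M)%:R + 1 :> R by rewrite -natrD addSn -natr1.
have hQ : m%:R + M%:R = (m + M)%:R :> R by rewrite natrD.
pose T : R := M%:R / ((m + M)%:R + 1).
pose Q : R := M%:R / (m%:R + M%:R).
pose eta : R := G / (4 * ((m + M)%:R + 1)).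
have T0 : 0 < T by apply: divr_gt0 => //; rewrite ltr0n.
have Q0 : 0 <= Q by exact: NMge.
have eta0 : 0 <= eta by apply: divr_ge0; [exact: ltW | clear -jm1; lra].
have cmQT : c m = Q - T.
  rewrite /c /Q /T hQ; field; repeat (apply/andP; split); apply/eqP; clear -jm jm'; lra.
have etaT : eta <= G * T / 4.
  rewrite /eta /T.
  have -> : G / (4 * ((m + M)%:R + 1)) = G / 4 * ((m + M)%:R + 1)^-1 * 1.
    by field; repeat (apply/andP; split); apply/eqP; clear -jm jm'; lra.
  have -> : G * (M%:R / ((m + M)%:R + 1)) / 4 = G / 4 * ((m + M)%:R + 1)^-1 * M%:R.
    by field; repeat (apply/andP; split); apply/eqP; clear -jm jm'; lra.
  apply: ler_wpM2l => //; apply: mulr_ge0; last by rewrite invr_ge0; exact: ltW.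
  by apply: divr_ge0; [exact: ltW | by []].
have hb : forall N, (m < N)%N -> cmod (u N y) <= 1 - G * T / 4.
  move=> N mN.
  have -> : u N y = \sum_(0 <= k < m) ((c k)%:C)%C * f k y + ((c m)%:C)%C * f m y
                   + \sum_(m.+1 <= k < N) ((c k)%:C)%C * f k y.
    by rewrite /u (big_cat_nat (leq0n m.+1) mN) big_nat_recr.
  apply: le_trans (cmodD _ _ _) _.
  apply: le_trans (lerD (cmodD _ _ _) (lexx _)) _.
  have p1 : cmod (\sum_(0 <= k < m) ((c k)%:C)%C * f k y) <= (1 - Q) * (1 + eta).
    apply: le_trans (cmod_sum _ _ _ _ _) _.
    apply: (@le_trans _ _ (\sum_(0 <= k < m) c k * (1 + eta))).
      apply: ler_sum_nat => k /andP[_ km]; rewrite cmodc ler_wpM2l //.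
      exact: ltW (near k m y km Ky Um).
    by rewrite -mulr_suml csum0.
  have p2 : cmod (((c m)%:C)%C * f m y) <= G * T / 2.
    rewrite cmodc; apply: le_trans (ler_wpM2l (c0 m) (fU m y Um)) _.
    rewrite /c /T /jr le_eqVlt; apply/orP; left; apply/eqP.
    by field; repeat (apply/andP; split); apply/eqP; clear -jm jm'; lra.
  have p3 : cmod (\sum_(m.+1 <= k < N) ((c k)%:C)%C * f k y) <= alpha * T.
    apply: le_trans (cmod_sum _ _ _ _ _) _.
    apply: (@le_trans _ _ (\sum_(m.+1 <= k < N) c k * alpha)).
      apply: ler_sum_nat => k /andP[mk _]; rewrite cmodc ler_wpM2l //.
      by apply: fout => // Uk; exact: (lm k mk Uk).
    rewrite -mulr_suml (@csum R M m.+1 N M1 mN) hT -/T mulrC.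
    by apply: ler_wpM2l; [exact: ltW | have := NMge N; clear; lra].
  have hGT : G * T = T - alpha * T by rewrite hG; ring.
  have e1 : (1 - Q) * (1 + eta) = 1 - Q + eta - eta * Q by ring.
  have eQ : 0 <= eta * Q by exact: mulr_ge0.
  have cm0 := c0 m.
  rewrite e1 in p1; clear -p1 p2 p3 hGT eQ cmQT etaT cm0; lra.
have : cmod (F y) <= 1 - G * T / 4.
  apply: (@lim_le R _ (1 - G * T / 4) (6 * M%:R) m.+1 M) => //.
  move=> N mN.
  have -> : F y = u N y + (F y - u N y) by rewrite addrC subrK.
  apply: le_trans (cmodD _ _ _) _; rewrite cmodB.
  have h1 := conv y Ky N; have h2 := hb N mN.
  move: h1 h2; rewrite /e; clear; lra.
have GT0 : 0 < G * T by exact: mulr_gt0.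
move=> h; apply: le_lt_trans h _; clear -GT0; lra.
Qed.
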